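(* Under the standing assumptions, let $\alpha^*(\eta)=\sup\{\theta\cdot\eta-\alpha(\theta):\theta\in\mathbb{R}^m\}$, $\eta\in\mathbb{R}^m$, be the convex conjugate of $\alpha$. Then $\alpha^*(\eta)<+\infty$ if and only if $\eta\in M$, where $M=\operatorname{conv}\{H(x):x\in\mathcal{X}\}\subset\mathbb{R}^m$ is the marginal polytope.
   Context: Standing assumptions. $\mathcal{X}$ is a finite set with a reference measure $\mu$ satisfying $\mu(x)>0$ for all $x$. $p:\mathcal{X}\to(0,\infty)$ is a strictly positive probability density w.r.t. $\mu$, i.e. $\sum_x p(x)\mu(x)=1$, and $\mathbb{E}_p[f]=\sum_x f(x)p(x)\mu(x)$. $\phi:(0,\infty)\to(0,\infty)$ is a positive, strictly increasing, absolutely continuous function with $\int_0^1 dy/\phi(y)=\int_1^{\infty}dy/\phi(y)=+\infty$. The $\phi$-logarithm is $\ln_\phi(v)=\int_1^v dy/\phi(y)$, $v>0$; it is a strictly increasing concave bijection $(0,\infty)\to\mathbb{R}$, and the $\phi$-exponential $\exp_\phi=\ln_\phi^{-1}:\mathbb{R}\to(0,\infty)$ is increasing, convex, differentiable, with $\exp_\phi'(u)=\phi(\exp_\phi(u))$, $\exp_\phi(0)=1$. Let $H=(H_1,\dots,H_m):\mathcal{X}\to\mathbb{R}^m$ be given statistics. For $\theta\in\mathbb{R}^m$, $\alpha(\theta)$ is the unique real number such that $\sum_x \exp_\phi(\theta\cdot H(x)-\alpha(\theta))\,p(x)\mu(x)=1$ (it exists and is unique since $a\mapsto\mathbb{E}_p[\exp_\phi(\theta\cdot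 H-a)]$ is continuous and strictly decreasing from $+\infty$ to $0$); the $\phi$-exponential family is $p_\theta=\exp_\phi(\theta\cdot H-\alpha(\theta))\,p$. The function $\alpha$ is convex. *)

(* Defs.v *)
From Stdlib Require Import Reals Lra List ClassicalEpsilon.
Open Scope R_scope.

Fixpoint fsum (n : nat) (f : nat -> R) : R :=
  match n with
  | O => 0
  | S k => fsum k f + f k
  end.

(* dot product on R^m, vectors represented as nat -> R (indices 0..m-1) *)
Definition dot (m : nat) (a b : nat -> R) : R := fsum m (fun i => a i * b i).

(* Riemann integral of f from a to b (oriented), defined when f is
   Riemann integrable on [a,b]; it does not depend on the integrability proof. *)
Definition integral (f : R -> R) (a b : R) : R :=
  epsilon (inhabits 0)
    (fun I => exists pr : Riemann_integrable f a b, RiemannInt pr = I).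

Fixpoint ordered_intervals (l : list (R * R)) : Prop :=
  match l with
  | nil => True
  | Iv :: l' => fst Iv <= snd Iv /\
      match l' with
      | nil => True
      | J :: _ => snd Iv <= fst J
      end /\ ordered_intervals l'
  end.

Definition abs_continuous_on (f : R -> R) (a b : R) : Prop :=
  forall eps, 0 < eps -> exists delta, 0 < delta /\
    forall l : list (R * R),
      ordered_intervals l ->
      (forall Iv, In Iv l -> a <= fst Iv /\ snd Iv <= b) ->
      fold_right (fun Iv s => (snd Iv - fst Iv) + s) 0 l < delta ->
      fold_right (fun Iv s => Rabs (f (snd Iv) - f (fst Iv)) + s) 0 l < eps.

Definition admissible_phi (phi : R -> R) : Prop :=
  (forall y, 0 < y -> 0 < phi y) /\
  (forall y z, 0 < y -> y < z -> phi y < phi z) /\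
  (forall a b, 0 < a -> a <= b -> abs_continuous_on phi a b) /\
  (* int_0^1 dy/phi(y) = +oo *)
  (forall B, exists v, 0 < v /\ v < 1 /\ integral (fun y => / phi y) v 1 > B) /\
  (* int_1^oo dy/phi(y) = +oo *)
  (forall B, exists v, 1 < v /\ integral (fun y => / phi y) 1 v > B).

Definition ln_phi (phi : R -> R) (v : R) : R := integral (fun y => / phi y) 1 v.

Definition exp_phi (phi : R -> R) (u : R) : R :=
  epsilon (inhabits 1) (fun v => 0 < v /\ ln_phi phi v = u).

(* X = {0,...,N-1}; E_p[f] = sum_x f(x) p(x) mu(x) *)
Definition expect (N : nat) (p mu : nat -> R) (f : nat -> R) : R :=
  fsum N (fun x => f x * p x * mu x).

Definition alpha (phi : R -> R) (N m : nat) (p mu : nat -> R)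
    (H : nat -> nat -> R) (theta : nat -> R) : R :=
  epsilon (inhabits 0)
    (fun a => expect N p mu (fun x => exp_phi phi (dot m theta (H x) - a)) = 1).

Definition in_marginal_polytope (N m : nat) (H : nat -> nat -> R) (eta : nat -> R)
  : Prop :=
  exists lam : nat -> R,
    (forall x, (x < N)%nat -> 0 <= lam x) /\
    fsum N lam = 1 /\
    forall i, (i < m)%nat -> eta i = fsum N (fun x => lam x * H x i).

(* Main.v *)
Require Import Defs.
From Stdlib Require Import Reals Lra Lia List Classical ClassicalEpsilon.
Open Scope R_scope.

Lemma fsum_ext n f g : (forall x, (x < n)%nat -> f x = g x) -> fsum n f = fsum n g.
Proof. induction n; simpl; intros; auto. rewrite IHn, H; auto. Qed.

Lemma fsum_plus n f g : fsum n (fun x => f x + g x) = fsum n f + fsum n g.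
Proof. induction n; simpl; [lra|]. rewrite IHn; lra. Qed.

Lemma fsum_scal n c f : fsum n (fun x => c * f x) = c * fsum n f.
Proof. induction n; simpl; [lra|]. rewrite IHn; lra. Qed.

Lemma fsum_le n f g : (forall x, (x < n)%nat -> f x <= g x) -> fsum n f <= fsum n g.
Proof. induction n; simpl; intros; [lra|]. assert (f n <= g n) by auto.
 assert (fsum n f <= fsum n g) by auto. lra. Qed.

Lemma fsum_lt n f g : (n > 0)%nat -> (forall x, (x < n)%nat -> f x < g x) -> fsum n f < fsum n g.
Proof. induction n; simpl; intros; [lia|]. assert (f n < g n) by auto.
 destruct n. simpl; lra.
 assert (fsum (S n) f < fsum (S n) g) by (apply IHn; auto; lia). lra. Qed.

Lemma fsum_swap n k f : fsum n (fun i => fsum k (fun x => f x i)) = fsum k (fun x => fsum n (fun i => f x i)).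
Proof. induction n; simpl.
 - induction k; simpl; lra.
 - rewrite IHn. rewrite <- fsum_plus. reflexivity. Qed.

Lemma fsum_term n f x : (forall y, (y < n)%nat -> 0 <= f y) -> (x < n)%nat -> f x <= fsum n f.
Proof. induction n; simpl; intros; [lia|].
 assert (0 <= fsum n f). { clear -H. induction n; simpl; [lra|]. assert (0 <= f n) by (apply H; lia).
   assert (0 <= fsum n f) by (apply IHn; intros; apply H; lia). lra. }
 destruct (Nat.eq_dec x n). subst; lra.
 assert (f x <= fsum n f) by (apply IHn; intros; try apply H; lia). assert (0 <= f n) by (apply H; lia). lra. Qed.

Lemma fsum_min n f : (n > 0)%nat -> exists x, (x < n)%nat /\ forall y, (y < n)%nat -> f x <= f y.
Proof. induction n; intros; [lia|]. destruct n.
 - exists 0%nat; split; [lia|]; intros; replace y with 0%nat by lia; lra.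
 - destruct IHn as [x [Hx Hm]]; [lia|].
   destruct (Rle_dec (f x) (f (S n))).
   + exists x; split; [lia|]; intros. destruct (Nat.eq_dec y (S n)); [subst; lra|]. apply Hm; lia.
   + exists (S n); split; [lia|]; intros. destruct (Nat.eq_dec y (S n)); [subst; lra|].
     assert (f x <= f y) by (apply Hm; lia). lra. Qed.

Lemma fsum_max n f : (n > 0)%nat -> exists x, (x < n)%nat /\ forall y, (y < n)%nat -> f y <= f x.
Proof. intros. destruct (fsum_min n (fun x => - f x) H) as [x [Hx Hm]]. exists x; split; auto.
 intros y Hy; specialize (Hm y Hy); lra. Qed.

Lemma dot_lin_r m th a b c d : dot m th (fun i => c * a i + d * b i) = c * dot m th a + d * dot m th b.
Proof. unfold dot. rewrite <- fsum_scal, <- fsum_scal, <- fsum_plus. apply fsum_ext; intros; ring. Qed.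

Lemma dot_scal_l m t th a : dot m (fun i => t * th i) a = t * dot m th a.
Proof. unfold dot. rewrite <- fsum_scal. apply fsum_ext; intros; ring. Qed.

Lemma dot_ext m th th' a a' : (forall i, (i < m)%nat -> th i = th' i /\ a i = a' i) -> dot m th a = dot m th' a'.
Proof. intros; unfold dot; apply fsum_ext; intros i Hi; destruct (H i Hi) as [-> ->]; auto. Qed.

Definition vec := nat -> R.

Inductive PosComb (l : list vec) : vec -> R -> Prop :=
| PC0 : PosComb l (fun _ => 0) 0
| PCadd v s w c : PosComb l v s -> In w l -> 0 <= c ->
    PosComb l (fun k => v k + c * w k) (s + c).

Lemma PosComb_nonneg l v s : PosComb l v s -> 0 <= s.
Proof. induction 1; lra. Qed.

Lemma PosComb_incl l l' v s : (forall w, In w l -> In w l') -> PosComb l v s -> PosComb l' v s.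
Proof. intros Hi; induction 1; constructor; auto. Qed.

Lemma list_max_f (A : Type) (f : A -> R) l : l <> nil -> exists a, In a l /\ forall b, In b l -> f b <= f a.
Proof. induction l; intros; [congruence|]. destruct l as [|a' l].
 - exists a; split; [left; auto|]; intros b [->|[]]; lra.
 - destruct IHl as [b0 [Hb0 Hm]]; [congruence|].
   destruct (Rle_dec (f a) (f b0)).
   + exists b0; split; [right; auto|]. intros b [<-|Hb]; auto.
   + exists a; split; [left; auto|]. intros b [<-|Hb]; [lra|]. specialize (Hm b Hb); lra. Qed.

Lemma sep_lists (A : Type) (Ls Us : list A) (lo up : A -> R) :
  (forall a b, In a Ls -> In b Us -> lo a < up b) ->
  exists t, (forall a, In a Ls -> lo a < t) /\ (forall b, In b Us -> t < up b).
Proof. intros H.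
 destruct Ls as [|a0 Ls']; destruct Us as [|b0 Us'].
 - exists 0; split; intros _ [].
 - destruct (list_max_f A (fun b => - up b) (b0 :: Us')) as [b [Hb Hm]]; [congruence|].
   exists (up b - 1); split; [intros _ []|]. intros b' Hb'; specialize (Hm b' Hb'); lra.
 - destruct (list_max_f A lo (a0 :: Ls')) as [a [Ha Hm]]; [congruence|].
   exists (lo a + 1); split; [|intros _ []]. intros a' Ha'; specialize (Hm a' Ha'); lra.
 - destruct (list_max_f A lo (a0 :: Ls')) as [a [Ha Hm]]; [congruence|].
   destruct (list_max_f A (fun b => - up b) (b0 :: Us')) as [b [Hb Hm']]; [congruence|].
   specialize (H a b Ha Hb).
   exists ((lo a + up b) / 2); split.
   + intros a' Ha'; specialize (Hm a' Ha'); lra.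
   + intros b' Hb'; specialize (Hm' b' Hb'); lra. Qed.

Definition isP m (w : vec) : bool := if Rlt_dec 0 (w m) then true else false.
Definition isN m (w : vec) : bool := if Rlt_dec (w m) 0 then true else false.
Definition isZ m (w : vec) : bool := if Req_EM_T (w m) 0 then true else false.
Definition comb m (wi wj : vec) : vec := fun k => (- wj m) * wi k + wi m * wj k.
Definition FM m (l : list vec) : list vec :=
  filter (isZ m) l ++ flat_map (fun wi => map (fun wj => comb m wi wj) (filter (isN m) l)) (filter (isP m) l).

Lemma FM_lift m l v s : PosComb (FM m l) v s ->
  exists v2 s2, PosComb l v2 s2 /\ (forall k, (k < m)%nat -> v2 k = v k) /\ v2 m = 0 /\
    0 <= s2 /\ (0 < s -> 0 < s2).
Proof.
 induction 1.
 - exists (fun _ => 0), 0; repeat split; try constructor; intros; lra.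
 - destruct IHPosComb as [v2 [s2 [Hp [Hk [Hm [Hs Hs']]]]]].
   unfold FM in H0. apply in_app_or in H0. destruct H0 as [Hz|Hf].
   + apply filter_In in Hz. destruct Hz as [Hw Hz]. unfold isZ in Hz.
     destruct (Req_EM_T (w m) 0) as [e|]; [|discriminate].
     exists (fun k => v2 k + c * w k), (s2 + c). repeat split.
     * constructor; auto.
     * intros k Hk'. rewrite Hk; auto.
     * simpl. rewrite Hm, e; ring.
     * lra.
     * intros. destruct (Rlt_le_dec 0 s); [specialize (Hs' r)|]; lra.
   + apply in_flat_map in Hf. destruct Hf as [wi [Hi Hj]]. apply in_map_iff in Hj.
     destruct Hj as [wj [Heq Hj]]. subst w.
     apply filter_In in Hi. destruct Hi as [Hi Hi']. unfold isP in Hi'.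
     destruct (Rlt_dec 0 (wi m)) as [ra|]; [|discriminate].
     apply filter_In in Hj. destruct Hj as [Hj Hj']. unfold isN in Hj'.
     destruct (Rlt_dec (wj m) 0) as [rb|]; [|discriminate].
     exists (fun k => (v2 k + (c * - wj m) * wi k) + (c * wi m) * wj k),
       (s2 + c * - wj m + c * wi m). repeat split.
     * constructor; [constructor; auto|auto|].
       -- apply Rmult_le_pos; lra.
       -- apply Rmult_le_pos; lra.
     * intros k Hk'. rewrite Hk; auto. unfold comb; ring.
     * simpl. rewrite Hm; ring.
     * assert (0 <= c * - wj m) by (apply Rmult_le_pos; lra).
       assert (0 <= c * wi m) by (apply Rmult_le_pos; lra). lra.
     * intros. assert (0 <= c * - wj m) by (apply Rmult_le_pos; lra).
       assert (0 <= c * wi m) by (apply Rmult_le_pos; lra).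
       destruct (Rlt_le_dec 0 s); [specialize (Hs' r); lra|].
       assert (0 < c) by lra. assert (0 < c * wi m) by (apply Rmult_lt_0_compat; lra). lra.
Qed.

Lemma gordan m : forall l : list vec,
  ~ (exists th : vec, forall w, In w l -> dot m th w < 0) ->
  exists v s, PosComb l v s /\ 0 < s /\ forall i, (i < m)%nat -> v i = 0.
Proof.
 induction m; intros l Hn.
 - destruct l as [|w l].
   + exfalso; apply Hn; exists (fun _ => 0); intros _ [].
   + exists (fun k => 0 + 1 * w k), (0 + 1). repeat split.
     * constructor; [constructor| left; auto | lra].
     * lra.
     * intros; lia.
 - destruct (IHm (FM m l)) as [v [s [Hp [Hs Hv]]]].
   + intros [th' Hth]. apply Hn.
     destruct (sep_lists vec (filter (isN m) l) (filter (isP m) l)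
                (fun wj => dot m th' wj / (- wj m)) (fun wi => - dot m th' wi / wi m))
       as [t [Ht1 Ht2]].
     { intros wj wi Hj Hi.
       assert (Hc : In (comb m wi wj) (FM m l)).
       { unfold FM. apply in_or_app; right. apply in_flat_map. exists wi; split; auto.
         apply in_map_iff. exists wj; split; auto. }
       specialize (Hth _ Hc). unfold comb in Hth. rewrite dot_lin_r in Hth.
       apply filter_In in Hi. destruct Hi as [_ Hi]. unfold isP in Hi.
       destruct (Rlt_dec 0 (wi m)) as [ra|]; [|discriminate].
       apply filter_In in Hj. destruct Hj as [_ Hj]. unfold isN in Hj.
       destruct (Rlt_dec (wj m) 0) as [rb|]; [|discriminate].
       set (a := wi m) in *. set (b := - wj m) in *. assert (0 < b) by (unfold b; lra).
       set (X := dot m th' wj) in *. set (Y := dot m th' wi) in *.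
       assert (H1 : X / b * b = X) by (field; lra).
       assert (H2 : Y / a * a = Y) by (field; lra).
       replace (- Y / a) with (- (Y / a)) by (field; lra).
       set (u := X / b) in *. set (w := Y / a) in *.
       rewrite <- H1, <- H2 in Hth. assert (0 < a * b) by (apply Rmult_lt_0_compat; lra).
       nra. }
     exists (fun k => if Nat.eq_dec k m then t else th' k).
     intros w Hw. unfold dot; simpl. fold (dot m (fun k => if Nat.eq_dec k m then t else th' k) w).
     rewrite (dot_ext m _ th' w w) by (intros i Hi; destruct (Nat.eq_dec i m); [lia|auto]).
     destruct (Nat.eq_dec m m) as [_|]; [|congruence].
     destruct (Rlt_dec 0 (w m)) as [ra|].
     * assert (Hi : In w (filter (isP m) l)) by (apply filter_In; split; auto; unfold isP; destruct (Rlt_dec 0 (w m)); auto; contradiction).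
       specialize (Ht2 w Hi). simpl in Ht2.
       assert (H2 : dot m th' w / w m * w m = dot m th' w) by (field; lra).
       replace (- dot m th' w / w m) with (- (dot m th' w / w m)) in Ht2 by (field; lra).
       rewrite <- H2. set (u := dot m th' w / w m) in *. nra.
     * destruct (Rlt_dec (w m) 0) as [rb|].
       -- assert (Hi : In w (filter (isN m) l)) by (apply filter_In; split; auto; unfold isN; destruct (Rlt_dec (w m) 0); auto; contradiction).
          specialize (Ht1 w Hi). simpl in Ht1.
          assert (H2 : dot m th' w / (- w m) * (- w m) = dot m th' w) by (field; lra).
          rewrite <- H2. set (u := dot m th' w / (- w m)) in *. nra.
       -- assert (e : w m = 0) by lra.
          assert (Hi : In w (FM m l)).
          { unfold FM; apply in_or_app; left; apply filter_In; split; auto. unfold isZ.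
            destruct (Req_EM_T (w m) 0); auto. }
          specialize (Hth w Hi). rewrite e; lra.
   + destruct (FM_lift m l v s Hp) as [v2 [s2 [Hp2 [Hk [Hm [_ Hs2]]]]]].
     exists v2, s2; repeat split; auto.
     intros i Hi. destruct (Nat.eq_dec i m); [subst; auto|]. rewrite Hk by lia. apply Hv; lia.
Qed.

Lemma cont_intro f x : (forall eps, 0 < eps -> exists d, 0 < d /\ forall z, Rabs (z - x) < d -> Rabs (f z - f x) < eps) -> continuity_pt f x.
Proof. intros H eps He. destruct (H eps He) as [d [Hd Hz]]. exists d; split; auto.
 intros z [_ Hz']. simpl in *. unfold R_dist in *. auto. Qed.

Section A.
Variable phi : R -> R.
Hypothesis Hphi : admissible_phi phi.

Lemma phi_pos y : 0 < y -> 0 < phi y.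
Proof. destruct Hphi as [H _]; auto. Qed.
Lemma phi_lt y z : 0 < y -> y < z -> phi y < phi z.
Proof. destruct Hphi as [_ [H _]]; auto. Qed.
Lemma phi_le y z : 0 < y -> y <= z -> phi y <= phi z.
Proof. intros. destruct H0; [left; apply phi_lt; auto| subst; lra]. Qed.

Lemma phi_cont y : 0 < y -> continuity_pt phi y.
Proof. intros Hy. destruct Hphi as [_ [_ [Hac _]]].
 specialize (Hac (y/2) (2*y) ltac:(lra) ltac:(lra)).
 apply cont_intro. intros eps He. destruct (Hac eps He) as [d [Hd Hl]].
 exists (Rmin d (y/2)); split. { apply Rmin_glb_lt; lra. }
 intros z Hz. assert (Hz1 : Rabs (z - y) < d) by (eapply Rlt_le_trans; [apply Hz| apply Rmin_l]).
 assert (Hz2 : Rabs (z - y) < y/2) by (eapply Rlt_le_trans; [apply Hz| apply Rmin_r]).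
 destruct (Rle_dec y z).
 - specialize (Hl ((y,z)::nil)). simpl in Hl.
   rewrite Rabs_right in Hz1, Hz2 by lra.
   assert (Rabs (phi z - phi y) + 0 < eps).
   { apply Hl; [repeat split; lra| |lra]. intros Iv [<-|[]]; simpl; lra. }
   lra.
 - specialize (Hl ((z,y)::nil)). simpl in Hl.
   rewrite Rabs_left in Hz1, Hz2 by lra.
   assert (Rabs (phi y - phi z) + 0 < eps).
   { apply Hl; [repeat split; lra| |lra]. intros Iv [<-|[]]; simpl; lra. }
   rewrite Rabs_minus_sym; lra.
Qed.

Notation g := (fun y => / phi y).

Lemma g_cont y : 0 < y -> continuity_pt g y.
Proof. intros. apply (continuity_pt_inv phi y (phi_cont y H)). apply Rgt_not_eq, phi_pos; auto. Qed.

Lemma ri a b : 0 < a -> 0 < b -> Riemann_integrable g a b.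
Proof. intros. destruct (Rle_dec a b).
 - apply continuity_implies_RiemannInt; auto. intros; apply g_cont; lra.
 - apply RiemannInt_P1. apply continuity_implies_RiemannInt; [lra|]. intros; apply g_cont; lra. Qed.

Lemma integral_eq a b (pr : Riemann_integrable g a b) : integral g a b = RiemannInt pr.
Proof. unfold integral.
 destruct (epsilon_spec (inhabits 0) (fun I => exists pr, RiemannInt pr = I)
   (ex_intro _ (RiemannInt pr) (ex_intro _ pr eq_refl))) as [pr' Hp].
 rewrite <- Hp. apply RiemannInt_P5. Qed.

Lemma int_bounds a b : 0 < a -> a <= b ->
  (b - a) * / phi b <= integral g a b <= (b - a) * / phi a.
Proof. intros Ha Hab. rewrite (integral_eq a b (ri a b Ha ltac:(lra))). split.
 - rewrite Rmult_comm, <- (RiemannInt_P15 (RiemannInt_P14 a b (/ phi b))).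
   apply RiemannInt_P19; auto. intros x Hx. unfold fct_cte.
   apply Rinv_le_contravar; [apply phi_pos; lra| apply phi_le; lra].
 - rewrite Rmult_comm, <- (RiemannInt_P15 (RiemannInt_P14 a b (/ phi a))).
   apply RiemannInt_P19; auto. intros x Hx. unfold fct_cte.
   apply Rinv_le_contravar; [apply phi_pos; lra| apply phi_le; lra]. Qed.

Lemma ln_diff a b : 0 < a -> 0 < b -> ln_phi phi b - ln_phi phi a = integral g a b.
Proof. intros. unfold ln_phi.
 rewrite (integral_eq 1 b (ri 1 b ltac:(lra) H0)), (integral_eq 1 a (ri 1 a ltac:(lra) H)),
   (integral_eq a b (ri a b H H0)).
 rewrite <- (RiemannInt_P26 (ri 1 a ltac:(lra) H) (ri a b H H0) (ri 1 b ltac:(lra) H0)). ring. Qed.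

Lemma ln1 : ln_phi phi 1 = 0.
Proof. unfold ln_phi. rewrite (integral_eq 1 1 (ri 1 1 ltac:(lra) ltac:(lra))). apply RiemannInt_P9. Qed.

Lemma ln_strict a b : 0 < a -> a < b -> ln_phi phi a < ln_phi phi b.
Proof. intros. assert (0 < b - ln_phi phi b * 0) by lra.
 pose proof (ln_diff a b H ltac:(lra)). pose proof (int_bounds a b H ltac:(lra)).
 assert (0 < (b - a) * / phi b). { apply Rmult_lt_0_compat; [lra|]. apply Rinv_0_lt_compat, phi_pos; lra. }
 lra. Qed.

Lemma ln_le a b : 0 < a -> a <= b -> ln_phi phi a <= ln_phi phi b.
Proof. intros. destruct H0; [left; apply ln_strict; auto| subst; lra]. Qed.

Lemma ln_lip c a b : 0 < c -> c <= a -> c <= b ->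
  Rabs (ln_phi phi b - ln_phi phi a) <= / phi c * Rabs (b - a).
Proof. intros.
 assert (Hg : forall y, c <= y -> / phi y <= / phi c).
 { intros; apply Rinv_le_contravar; [apply phi_pos; lra| apply phi_le; lra]. }
 destruct (Rle_dec a b).
 - rewrite ln_diff by lra. pose proof (int_bounds a b ltac:(lra) r).
   assert (0 <= (b - a) * / phi b). { apply Rmult_le_pos; [lra|]. left; apply Rinv_0_lt_compat, phi_pos; lra. }
   rewrite Rabs_right by lra. rewrite Rabs_right by lra.
   specialize (Hg a H0). assert ((b - a) * / phi a <= (b - a) * / phi c) by (apply Rmult_le_compat_l; lra).
   lra.
 - rewrite Rabs_minus_sym, (Rabs_minus_sym b a). rewrite ln_diff by lra.
   pose proof (int_bounds b a ltac:(lra) ltac:(lra)).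
   assert (0 <= (a - b) * / phi a). { apply Rmult_le_pos; [lra|]. left; apply Rinv_0_lt_compat, phi_pos; lra. }
   rewrite Rabs_right by lra. rewrite Rabs_right by lra.
   specialize (Hg b H1). assert ((a - b) * / phi b <= (a - b) * / phi c) by (apply Rmult_le_compat_l; lra).
   lra.
Qed.

Lemma ln_unb_up u : exists v, 0 < v /\ u < ln_phi phi v.
Proof. destruct Hphi as [_ [_ [_ [_ H]]]]. destruct (H u) as [v [Hv Hi]]. exists v; split; [lra|]. exact Hi. Qed.

Lemma ln_unb_down u : exists v, 0 < v /\ ln_phi phi v < u.
Proof. destruct Hphi as [_ [_ [_ [H _]]]]. destruct (H (- u)) as [v [Hv [Hv1 Hi]]].
 exists v; split; auto. unfold ln_phi.
 rewrite (integral_eq 1 v (ri 1 v ltac:(lra) Hv)).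
 rewrite (integral_eq v 1 (ri v 1 Hv ltac:(lra))) in Hi.
 rewrite (RiemannInt_P8 (ri 1 v ltac:(lra) Hv) (ri v 1 Hv ltac:(lra))). lra. Qed.

Lemma Rmax_lip c z x : Rabs (Rmax c z - Rmax c x) <= Rabs (z - x).
Proof. unfold Rmax. destruct (Rle_dec c z), (Rle_dec c x);
 unfold Rabs; repeat destruct Rcase_abs; lra. Qed.

Lemma ln_surj u : exists v, 0 < v /\ ln_phi phi v = u.
Proof.
 destruct (ln_unb_down u) as [v1 [Hv1 Hl1]]. destruct (ln_unb_up u) as [v2 [Hv2 Hl2]].
 assert (Hlt : v1 < v2). { destruct (Rlt_le_dec v1 v2); auto. pose proof (ln_le v2 v1 Hv2 r). lra. }
 set (h := fun x => ln_phi phi (Rmax v1 x) - u).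
 assert (Hc : continuity h).
 { intros x. apply cont_intro. intros eps He.
   assert (HL : 0 < / phi v1) by (apply Rinv_0_lt_compat, phi_pos; auto). assert (0 < phi v1) by (apply phi_pos; auto).
   exists (eps / / phi v1); split. { apply Rdiv_lt_0_compat; auto. }
   intros z Hz. unfold h. replace (ln_phi phi (Rmax v1 z) - u - (ln_phi phi (Rmax v1 x) - u))
     with (ln_phi phi (Rmax v1 z) - ln_phi phi (Rmax v1 x)) by ring.
   eapply Rle_lt_trans. apply (ln_lip v1); auto; apply Rmax_l.
   eapply Rle_lt_trans. apply Rmult_le_compat_l; [lra| apply Rmax_lip].
   replace eps with (/ phi v1 * (eps / / phi v1)) by (field; lra).
   apply Rmult_lt_compat_l; auto. }
 destruct (IVT h v1 v2 Hc Hlt) as [z [Hz Hh]].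
 - unfold h. rewrite Rmax_left by lra. lra.
 - unfold h. rewrite Rmax_right by lra. lra.
 - exists z; split; [lra|]. unfold h in Hh. rewrite Rmax_right in Hh by lra. lra.
Qed.

Lemma exp_spec u : 0 < exp_phi phi u /\ ln_phi phi (exp_phi phi u) = u.
Proof. unfold exp_phi. apply epsilon_spec. apply ln_surj. Qed.

Lemma expphi_pos u : 0 < exp_phi phi u.
Proof. apply exp_spec. Qed.
Lemma ln_exp u : ln_phi phi (exp_phi phi u) = u.
Proof. apply exp_spec. Qed.

Lemma exp_lt_of a u : 0 < a -> u < ln_phi phi a -> exp_phi phi u < a.
Proof. intros. destruct (Rlt_le_dec (exp_phi phi u) a); auto.
 pose proof (ln_le a _ H r). rewrite ln_exp in H1. lra. Qed.

Lemma exp_gt_of a u : 0 < a -> ln_phi phi a < u -> a < exp_phi phi u.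
Proof. intros. destruct (Rlt_le_dec a (exp_phi phi u)); auto.
 pose proof (ln_le _ a (expphi_pos u) r). rewrite ln_exp in H1. lra. Qed.

Lemma exp_le_inv a u : 0 < a -> exp_phi phi u <= a -> u <= ln_phi phi a.
Proof. intros. pose proof (ln_le _ a (expphi_pos u) H0). rewrite ln_exp in H1. auto. Qed.

Lemma exp_cont : continuity (exp_phi phi).
Proof. intros u. apply cont_intro. intros eps He.
 set (v := exp_phi phi u). assert (Hv : 0 < v) by apply expphi_pos.
 set (e := Rmin eps (v/2)). assert (He1 : 0 < e) by (apply Rmin_glb_lt; lra).
 assert (He2 : e <= v/2) by apply Rmin_r. assert (He3 : e <= eps) by apply Rmin_l.
 assert (Hl1 : ln_phi phi (v - e) < u). { rewrite <- (ln_exp u). apply ln_strict; fold v; lra. }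
 assert (Hl2 : u < ln_phi phi (v + e)). { rewrite <- (ln_exp u) at 1. apply ln_strict; fold v; lra. }
 exists (Rmin (u - ln_phi phi (v - e)) (ln_phi phi (v + e) - u)); split.
 { apply Rmin_glb_lt; lra. }
 intros z Hz.

 assert (Hz1 : Rabs (z - u) < u - ln_phi phi (v - e)) by (eapply Rlt_le_trans; [apply Hz| apply Rmin_l]).
 assert (Hz2 : Rabs (z - u) < ln_phi phi (v + e) - u) by (eapply Rlt_le_trans; [apply Hz| apply Rmin_r]).
 assert (A1 : v - e < exp_phi phi z). { apply exp_gt_of; [lra|]. unfold Rabs in Hz1; destruct Rcase_abs in Hz1; lra. }
 assert (A2 : exp_phi phi z < v + e). { apply exp_lt_of; [lra|]. unfold Rabs in Hz2; destruct Rcase_abs in Hz2; lra. }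
 fold v. unfold Rabs; destruct Rcase_abs; lra.
Qed.

End A.

Lemma fsum_cont n (f : nat -> R -> R) : (forall x, continuity (f x)) -> continuity (fun a => fsum n (fun x => f x a)).
Proof. intros Hf. induction n; simpl; intros a.
 - apply continuity_pt_const. intros u v; reflexivity.
 - apply (continuity_pt_plus (fun a => fsum n (fun x => f x a)) (f n)); [apply IHn| apply Hf]. Qed.

Lemma Npos_sum N (mu p : nat -> R) : fsum N (fun x => p x * mu x) = 1 -> (N > 0)%nat.
Proof. destruct N; simpl; intros; [lra| lia]. Qed.

Lemma alpha_spec phi N m (mu p : nat -> R) H theta :
  admissible_phi phi ->
  (forall x, (x < N)%nat -> 0 < mu x) ->
  (forall x, (x < N)%nat -> 0 < p x) ->
  fsum N (fun x => p x * mu x) = 1 ->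
  expect N p mu (fun x => exp_phi phi (dot m theta (H x) - alpha phi N m p mu H theta)) = 1.
Proof. intros Hphi Hmu Hp Hs. unfold alpha. apply epsilon_spec.
 set (c := fun x => dot m theta (H x)).
 set (F := fun a => expect N p mu (fun x => exp_phi phi (c x - a))).
 assert (HN := Npos_sum N mu p Hs).
 assert (Hpm : forall x, (x < N)%nat -> 0 < p x * mu x) by (intros; apply Rmult_lt_0_compat; auto).
 destruct (fsum_min N c HN) as [x0 [Hx0 Hmin]]. destruct (fsum_max N c HN) as [x1 [Hx1 Hmax]].
 assert (HK : c x0 <= c x1) by auto.
 assert (Hc : continuity (fun a => 1 - F a)).
 { apply continuity_minus. { intros a; apply continuity_pt_const; intros u v; reflexivity. }
   unfold F, expect. apply fsum_cont. intros x a.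
   apply (continuity_pt_mult (fun a => exp_phi phi (c x - a) * p x) (fun _ => mu x)).
   2: { apply continuity_pt_const; intros u v; reflexivity. }
   apply (continuity_pt_mult (fun a => exp_phi phi (c x - a)) (fun _ => p x)).
   2: { apply continuity_pt_const; intros u v; reflexivity. }
   apply (continuity_pt_comp (fun a => c x - a) (exp_phi phi)).
   - apply continuity_pt_minus; [apply continuity_pt_const; intros u v; reflexivity| apply derivable_continuous_pt, derivable_pt_id].
   - apply exp_cont; auto. }
 destruct (IVT (fun a => 1 - F a) (c x0 - 1) (c x1 + 1) Hc ltac:(lra)) as [z [_ Hz]].
 - assert (fsum N (fun x => p x * mu x) < F (c x0 - 1)); [|lra]. unfold F, expect.
   apply fsum_lt; auto. intros x Hx. specialize (Hmin x Hx). specialize (Hpm x Hx).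
   assert (1 < exp_phi phi (c x - (c x0 - 1))) by (apply exp_gt_of; auto; [lra| rewrite ln1; auto; lra]).
   cbv beta; rewrite Rmult_assoc; rewrite <- (Rmult_1_l (p x * mu x)) at 1; apply Rmult_lt_compat_r; auto.
 - assert (F (c x1 + 1) < fsum N (fun x => p x * mu x)); [|lra]. unfold F, expect.
   apply fsum_lt; auto. intros x Hx. specialize (Hmax x Hx). specialize (Hpm x Hx).
   assert (exp_phi phi (c x - (c x1 + 1)) < 1) by (apply exp_lt_of; auto; [lra| rewrite ln1; auto; lra]).
   cbv beta; rewrite Rmult_assoc; rewrite <- (Rmult_1_l (p x * mu x)) at 2; apply Rmult_lt_compat_r; auto.
 - exists z. simpl in Hz. unfold F in Hz. unfold c in Hz. lra.
Qed.

Lemma fsum_delta N x0 c f : (x0 < N)%nat ->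
  fsum N (fun x => (if Nat.eq_dec x x0 then c else 0) * f x) = c * f x0.
Proof. induction N; simpl; intros; [lia|].
 destruct (Nat.eq_dec N x0).
 - subst. rewrite (fsum_ext _ _ (fun _ => 0)). { assert (fsum x0 (fun _ : nat => 0) = 0) as -> by (clear; induction x0; simpl; [|rewrite IHx0]; ring). ring. }
   intros x Hx; destruct (Nat.eq_dec x x0); [lia|ring].
 - rewrite IHN by lia. ring. Qed.

Lemma fsum_zero n f : (forall x, f x = 0) -> fsum n f = 0.
Proof. induction n; simpl; intros; auto. rewrite IHn, H; auto; ring. Qed.

Lemma PosComb_lam N (w : nat -> vec) v s :
  PosComb (map w (seq 0 N)) v s ->
  exists lam, (forall x, (x < N)%nat -> 0 <= lam x) /\ fsum N lam = s /\
    forall i, v i = fsum N (fun x => lam x * w x i).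
Proof. induction 1.
 - exists (fun _ => 0); repeat split; intros; try lra.
   + first [apply fsum_zero | symmetry; apply fsum_zero]; intros; ring.
   + first [apply fsum_zero | symmetry; apply fsum_zero]; intros; ring.
 - destruct IHPosComb as [lam [K1 [K2 K3]]].
   apply in_map_iff in H0. destruct H0 as [x0 [<- Hx0]]. apply in_seq in Hx0.
   exists (fun x => lam x + (if Nat.eq_dec x x0 then c else 0) * 1). repeat split.
   + intros x Hx; specialize (K1 x Hx); destruct (Nat.eq_dec x x0); lra.
   + rewrite fsum_plus, fsum_delta by lia. rewrite K2; ring.
   + intros i. cbv beta. rewrite K3. symmetry.
     rewrite (fsum_ext _ _ (fun x => lam x * w x i + (if Nat.eq_dec x x0 then c else 0) * w x i))
       by (intros; ring).
     rewrite fsum_plus, fsum_delta by lia. ring.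
Qed.

Theorem theorem1 (phi : R -> R) (N m : nat) (mu p : nat -> R)
    (H : nat -> nat -> R) (eta : nat -> R) :
  admissible_phi phi ->
  (forall x, (x < N)%nat -> 0 < mu x) ->
  (forall x, (x < N)%nat -> 0 < p x) ->
  fsum N (fun x => p x * mu x) = 1 ->
  ((exists B : R, forall theta : nat -> R,
       dot m theta eta - alpha phi N m p mu H theta <= B)
   <-> in_marginal_polytope N m H eta).
Proof.
 intros Hphi Hmu Hp Hs.
 assert (HN := Npos_sum N mu p Hs).
 assert (Hpm : forall x, (x < N)%nat -> 0 < p x * mu x) by (intros; apply Rmult_lt_0_compat; auto).
 split.
 - intros [B HB].
   set (w := fun x => fun i => H x i - eta i).
   destruct (classic (exists th : vec, forall v, In v (map w (seq 0 N)) -> dot m th v < 0)) as [Hex|Hn].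
   + exfalso. destruct Hex as [th Hth].
     assert (Hd : forall x, (x < N)%nat -> dot m th (H x) - dot m th eta < 0).
     { intros x Hx. assert (Hi : In (w x) (map w (seq 0 N))) by (apply in_map, in_seq; lia).
       specialize (Hth _ Hi). unfold w in Hth.
       rewrite (dot_ext m th th _ (fun i => 1 * H x i + (-1) * eta i)) in Hth by (intros; split; auto; ring).
       rewrite dot_lin_r in Hth. lra. }
     destruct (fsum_min N (fun x => dot m th eta - dot m th (H x)) HN) as [x0 [Hx0 Hmin]].
     set (d := dot m th eta - dot m th (H x0)) in *.
     assert (Hd0 : 0 < d) by (specialize (Hd x0 Hx0); unfold d; lra).
     set (t := (Rabs B + 1) / d).
     assert (Ht : 0 < t) by (unfold t; apply Rdiv_lt_0_compat; [pose proof (Rabs_pos B)|]; lra).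
     set (tt := fun i => t * th i).
     set (a := alpha phi N m p mu H tt).
     pose proof (alpha_spec phi N m mu p H tt Hphi Hmu Hp Hs) as Ha. fold a in Ha.
     assert (Hex : exists x, (x < N)%nat /\ a <= dot m tt (H x)).
     { apply NNPP; intro Hne.
       assert (Hall : forall x, (x < N)%nat -> dot m tt (H x) - a < 0).
       { intros x Hx. destruct (Rlt_le_dec (dot m tt (H x) - a) 0); auto.
         exfalso; apply Hne; exists x; split; auto; lra. }
       assert (expect N p mu (fun x => exp_phi phi (dot m tt (H x) - a)) < fsum N (fun x => p x * mu x)); [|lra].
       unfold expect. apply fsum_lt; auto. intros x Hx. specialize (Hpm x Hx).
       assert (exp_phi phi (dot m tt (H x) - a) < 1) by (apply exp_lt_of; auto; [lra| rewrite ln1; auto]).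
       specialize (Hall x Hx).
       rewrite Rmult_assoc; rewrite <- (Rmult_1_l (p x * mu x)) at 2; apply Rmult_lt_compat_r; auto. }
     destruct Hex as [x [Hx Hax]].
     specialize (HB tt). fold a in HB. unfold tt in HB, Hax. rewrite dot_scal_l in HB, Hax.
     specialize (Hmin x Hx).
     assert (t * d <= t * (dot m th eta - dot m th (H x))) by (apply Rmult_le_compat_l; lra).
     assert (t * d = Rabs B + 1) by (unfold t; field; lra).
     pose proof (Rle_abs B). lra.
   + destruct (gordan m (map w (seq 0 N)) Hn) as [v [s [Hpc [Hs0 Hv]]]].
     destruct (PosComb_lam N w v s Hpc) as [lam [Hl1 [Hl2 Hl3]]].
     exists (fun x => lam x / s). repeat split.
     * intros x Hx. specialize (Hl1 x Hx). unfold Rdiv; apply Rmult_le_pos; [lra|]. left; apply Rinv_0_lt_compat; lra.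
     * unfold Rdiv. rewrite (fsum_ext _ _ (fun x => / s * lam x)) by (intros; ring).
       rewrite fsum_scal, Hl2. field; lra.
     * intros i Hi. specialize (Hv i Hi). rewrite Hl3 in Hv. unfold w in Hv.
       rewrite (fsum_ext _ _ (fun x => lam x * H x i + (- eta i) * lam x)) in Hv by (intros; ring).
       rewrite fsum_plus, fsum_scal, Hl2 in Hv.
       unfold Rdiv. rewrite (fsum_ext _ _ (fun x => / s * (lam x * H x i))) by (intros; ring).
       rewrite fsum_scal. apply (Rmult_eq_reg_l s); [|lra]. field_simplify; lra.
 - intros [lam [Hl1 [Hl2 Hl3]]].
   destruct (fsum_max N (fun x => ln_phi phi (/ (p x * mu x))) HN) as [x1 [Hx1 Hmax]].
   exists (ln_phi phi (/ (p x1 * mu x1))). intros theta.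
   set (a := alpha phi N m p mu H theta).
   pose proof (alpha_spec phi N m mu p H theta Hphi Hmu Hp Hs) as Ha. fold a in Ha.
   set (Bm := ln_phi phi (/ (p x1 * mu x1))) in *.
   assert (Hc : forall x, (x < N)%nat -> dot m theta (H x) <= a + Bm).
   { intros x Hx. specialize (Hpm x Hx).
     assert (Ht : exp_phi phi (dot m theta (H x) - a) * p x * mu x <= 1).
     { rewrite <- Ha. unfold expect.
       apply (fsum_term N (fun x => exp_phi phi (dot m theta (H x) - a) * p x * mu x)); auto.
       intros y Hy. rewrite Rmult_assoc. apply Rmult_le_pos; [left; apply expphi_pos; auto| left; apply Rmult_lt_0_compat; auto]. }
     assert (exp_phi phi (dot m theta (H x) - a) <= / (p x * mu x)).
     { apply (Rmult_le_reg_r (p x * mu x)); auto. rewrite Rinv_l by lra. rewrite <- Rmult_assoc; auto. }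
     apply exp_le_inv in H0; auto; [| apply Rinv_0_lt_compat; auto].
     specialize (Hmax x Hx). simpl in Hmax. fold Bm in Hmax. lra. }
   assert (Heq : dot m theta eta = fsum N (fun x => lam x * dot m theta (H x))).
   { unfold dot. rewrite (fsum_ext m _ (fun i => fsum N (fun x => theta i * (lam x * H x i))))
       by (intros i Hi; rewrite Hl3 by auto; rewrite <- fsum_scal; auto).
     rewrite fsum_swap. apply fsum_ext. intros x Hx. rewrite <- fsum_scal. apply fsum_ext; intros; ring. }
   rewrite Heq.
   assert (fsum N (fun x => lam x * dot m theta (H x)) <= fsum N (fun x => (a + Bm) * lam x)).
   { apply fsum_le. intros x Hx. specialize (Hc x Hx). specialize (Hl1 x Hx).
     rewrite Rmult_comm. apply Rmult_le_compat_r; auto. }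
   rewrite fsum_scal, Hl2 in H0. lra.
Qed.
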